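(* Suppose the cost norm is $\|\cdot\|=\|\cdot\|_2$ and the Margin assumption holds. Let $\{y_t\}_{t\ge1}$ be generated by the gradient-based SMM algorithm with any positive stepsizes $\{\gamma_t\}$ (with the initialization terminating). Then $y_*^\top v(y_t)\ge0$ for all $t\ge1$ (equivalently $y_*^\top y_t\ge0$).
   Context: Setting: $\mathcal{A}\subseteq\mathbb{R}^d$, labels $\ell(A)\in\{\pm1\}$; $\operatorname{sign}(0)=+1$; cost constant $c>0$; norm $\|\cdot\|=\|\cdot\|_2$ (self-dual), $v(y)=y/\|y\|_2$ for $y\ne0$, $v(0)=0$. Predicted label $\hat\ell(x,y,b)=\operatorname{sign}(y^\top x+b-2\|y\|_2/c)$. Response: for $y\ne0$, $r(A,y,b)=A+(\tfrac2c-\tfrac{y^\top A+b}{\|y\|_2})v(y)$ if $0\le\tfrac{y^\top A+b}{\|y\|_2}<\tfrac2c$, else $A$. Proxy: for $y\ne0$, $s(A,y,b)=A-\tfrac{y^\top A+b}{\|y\|_2}v(y)$ if $0\le\tfrac{y^\top A+b}{\|y\|_2}<\tfrac2c$ and $\ell(A)=-1$; $=A+(\tfrac2c-\tfrac{y^\top A+b}{\|y\|_2})v(y)$ if the range condition holds and $\ell(A)=+1$; $=A$ otherwise; $r(A,0,b)=s(A,0,b)=A$. Margin function $h(y,b;\widetilde{\mathcal{A}}^+,\widetilde{\mathcal{A}}^-)=\min\{\min_{x\in\widetilde{\mathcal{A}}^+}(y^\top x+b),\min_{x\in\widetilde{\mathcal{A}}^-}(-y^\top x-b)\}$. Margin assumption: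 $d_*:=\max_{y\ne0,b}\min_{A\in\mathcal{A}}\ell(A)\frac{y^\top A+b}{\|y\|_2}$ attained at some $(y_*,b_* )$, $y_*\ne0$, $d_*>0$. Gradient-based SMM algorithm: initialization as follows: $\widetilde{\mathcal{A}}_0^\pm=\emptyset$, $(y,b)=(0,1)$; each arriving agent (responding with its true $A$) is added to $\widetilde{\mathcal{A}}_0^+$ or $\widetilde{\mathcal{A}}_0^-$ by label; then $b:=-1$ if $\widetilde{\mathcal{A}}_0^+=\emptyset$, else $b:=+1$ if $\widetilde{\mathcal{A}}_0^-=\emptyset$; stop when both nonempty; $(y_1,b_1)$ is an optimal solution of $\max\{h(y,b;\widetilde{\mathcal{A}}_0^+,\widetilde{\mathcal{A}}_0^-):\|y\|_2\le1,b\in\mathbb{R}\}$; set $z_1=y_1$. For $t\ge1$: agent $A_t\in\mathcal{A}$ is shown $(y_t,b_t)$, responds $r(A_t,y_t,b_t)$, is predicted $\hat\ell(r(A_t,y_t,b_t),y_t,b_t)$; $s(A_t,y_t,b_t)$ is appended to $\widetilde{\mathcal{A}}_{t-1}^+$ if $\ell(A_t)=+1$, else to $\widetilde{\mathcal{A}}_{t-1}^-$, giving $\widetilde{\mathcal{A}}_t^\pm$; choose $s_t^+\in\arg\min_{x\in\widetilde{\mathcal{A}}_t^+}z_t^\top x$, $s_t^-\in\arg\max_{x\in\widetilde{\mathcal{A}}_t^-}z_t^\top x$; set $z_{t+1}=\Pi_{B}(z_t+\gamma_t(s_t^+-s_t^-))$ where $\Pi_B$ is Euclidean projection onto the unit $\ell_2$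 ball; $y_{t+1}=\frac{\sum_{\tau=1}^{t+1}\gamma_\tau z_\tau}{\sum_{\tau=1}^{t+1}\gamma_\tau}$ and $b_{t+1}=-\tfrac12\big(\min_{x\in\widetilde{\mathcal{A}}_t^+}y_{t+1}^\top x+\max_{x\in\widetilde{\mathcal{A}}_t^-}y_{t+1}^\top x\big)$. *)

(* Defs.v *)
From mathcomp Require Import all_boot all_order all_algebra.
From mathcomp Require Import reals.
Set Implicit Arguments. Unset Strict Implicit. Unset Printing Implicit Defensive.
Import Order.TTheory GRing.Theory Num.Theory.
Local Open Scope ring_scope.

Section SMM.
Variables (R : realType) (d : nat).
Notation vec := 'rV[R]_d.

Definition dotp (u w : vec) : R := \sum_(i < d) u 0 i * w 0 i.
Definition norm2 (u : vec) : R := Num.sqrt (dotp u u).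

Definition vdir (u : vec) : vec := if u == 0 then 0 else (norm2 u)^-1 *: u.

Definition projB (u : vec) : vec := if norm2 u <= 1 then u else (norm2 u)^-1 *: u.

Definition minseq (s : seq R) : R :=
  match s with [::] => 0 | x :: s' => foldr Num.min x s' end.
Definition maxseq (s : seq R) : R :=
  match s with [::] => 0 | x :: s' => foldr Num.max x s' end.

Definition hmargin (y : vec) (b : R) (Ap Am : seq vec) : R :=
  Num.min (minseq [seq dotp y x + b | x <- Ap]) (minseq [seq - dotp y x - b | x <- Am]).

Definition smargin (lab : vec -> R) (y : vec) (b : R) (A : vec) : R :=
  lab A * (dotp y A + b) / norm2 y.

Definition proxy (c : R) (lab : vec -> R) (A y : vec) (b : R) : vec :=
  if y == 0 then A else
  let m := (dotp y A + b) / norm2 y in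
  if (0 <= m) && (m < 2 / c) then
    (if lab A == 1 then A + (2 / c - m) *: vdir y else A - m *: vdir y)
  else A.

End SMM.

(* Main.v *)
Require Import Defs.
From mathcomp Require Import all_boot all_order all_algebra.
From mathcomp Require Import reals.
From mathcomp Require Import ring lra zify.
Import Order.TTheory GRing.Theory Num.Theory.
Local Open Scope ring_scope.

Section Helpers.
Variables (R : realType) (d : nat).
Implicit Types (u v w : 'rV[R]_d).

Lemma dotpDr u v w : dotp u (v + w) = dotp u v + dotp u w.
Proof. rewrite /dotp -big_split /=; apply: eq_bigr => i _; by rewrite mxE mulrDr. Qed.
Lemma dotpZr u v a : dotp u (a *: v) = a * dotp u v.
Proof. rewrite /dotp mulr_sumr; apply: eq_bigr => i _; by rewrite mxE mulrCA. Qed.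
Lemma dotpNr u v : dotp u (- v) = - dotp u v.
Proof. by rewrite -scaleN1r dotpZr mulN1r. Qed.
Lemma dotpBr u v w : dotp u (v - w) = dotp u v - dotp u w.
Proof. by rewrite dotpDr dotpNr. Qed.
Lemma dotp0r u : dotp u 0 = 0.
Proof. by rewrite -(scale0r (0 : 'rV[R]_d)) dotpZr mul0r. Qed.
Lemma dotpC u v : dotp u v = dotp v u.
Proof. by apply: eq_bigr => i _; rewrite mulrC. Qed.
Lemma dotpBl u v w : dotp (v - w) u = dotp v u - dotp w u.
Proof. by rewrite !(dotpC _ u) dotpBr. Qed.
Lemma dotpZl u v a : dotp (a *: v) u = a * dotp v u.
Proof. by rewrite !(dotpC _ u) dotpZr. Qed.

Lemma minseq_spec (f : 'rV[R]_d -> R) (s : seq 'rV[R]_d) : s != [::] ->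
  (exists2 x, x \in s & minseq [seq f x | x <- s] = f x) /\
  (forall x, x \in s -> minseq [seq f x | x <- s] <= f x).
Proof.
case: s => // x s _ /=.
elim: s => [|y s [[x0 hx0 e] hle]] /=.
  by split; [exists x; rewrite ?inE | move=> z; rewrite inE => /eqP ->].
split.
  case: (leP (f y) (foldr Num.min (f x) [seq f x | x <- s])) => h.
  - exists y; first by rewrite !inE eqxx orbT.
    by [].
  - exists x0; first by move: hx0; rewrite !inE => /orP [->|->]; rewrite ?orbT.
    by [].
move=> z; rewrite !inE => /orP [/eqP ->|/orP [/eqP ->|hz]].
- by rewrite ge_min; apply/orP; right; apply: hle; rewrite inE eqxx.
- by rewrite ge_min lexx.
- by rewrite ge_min; apply/orP; right; apply: hle; rewrite inE hz orbT.
Qed.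

Lemma minseq_lt (f g : 'rV[R]_d -> R) (s : seq 'rV[R]_d) : s != [::] ->
  (forall x, x \in s -> f x < g x) ->
  minseq [seq f x | x <- s] < minseq [seq g x | x <- s].
Proof.
move=> ne h; have [[x hx e] _] := minseq_spec g s ne.
have [_ hle] := minseq_spec f s ne.
by rewrite e; apply: le_lt_trans (hle x hx) (h x hx).
Qed.

End Helpers.

Lemma dotp_sumr (R : realType) (d : nat) (u : 'rV[R]_d) (I : Type) (r : seq I)
  (P : pred I) (F : I -> 'rV[R]_d) :
  dotp u (\sum_(i <- r | P i) F i) = \sum_(i <- r | P i) dotp u (F i).
Proof. exact: (big_morph (dotp u) (@dotpDr R d u) (@dotp0r R d u)). Qed.

Lemma norm2_ge0 (R : realType) (d : nat) (u : 'rV[R]_d) : 0 <= norm2 u.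
Proof. exact: sqrtr_ge0. Qed.

Lemma vdir_ge0 (R : realType) (d : nat) (u w : 'rV[R]_d) :
  0 <= dotp u w -> 0 <= dotp u (vdir w).
Proof.
move=> h; rewrite /vdir; case: ifP => _; first by rewrite dotp0r.
by rewrite dotpZr mulr_ge0 // invr_ge0 norm2_ge0.
Qed.

Lemma proxy_ge (R : realType) (d : nat) (c : R) (lab : 'rV[R]_d -> R) (ys a y : 'rV[R]_d) (bb : R) :
  0 <= dotp ys y -> lab a = 1 -> dotp ys a <= dotp ys (proxy c lab a y bb).
Proof.
move=> hy hl; rewrite /proxy; case: ifP => _ //.
case: ifP => [/andP [m0 m2]|_] //; rewrite hl eqxx dotpDr dotpZr lerDl.
by rewrite mulr_ge0 ?vdir_ge0 // subr_ge0 ltW.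
Qed.

Lemma proxy_le (R : realType) (d : nat) (c : R) (lab : 'rV[R]_d -> R) (ys a y : 'rV[R]_d) (bb : R) :
  0 <= dotp ys y -> lab a != 1 -> dotp ys (proxy c lab a y bb) <= dotp ys a.
Proof.
move=> hy hl; rewrite /proxy; case: ifP => _ //.
case: ifP => [/andP [m0 m2]|_] //; rewrite (negbTE hl) dotpBr dotpZr lerBlDr lerDl.
by rewrite mulr_ge0 ?vdir_ge0.
Qed.

Theorem mainTheorem12 (R : realType) (d : nat) (c : R) (hc : 0 < c)
  (Aset : 'rV[R]_d -> Prop) (lab : 'rV[R]_d -> R)
  (hlab : forall a, Aset a -> lab a = 1 \/ lab a = -1)
  (* margin assumption: (ys, bs) attains the max-min margin ds > 0 *)
  (ys : 'rV[R]_d) (bs ds : R)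
  (hys : ys != 0) (hds : 0 < ds)
  (hmarg : forall a, Aset a -> ds <= smargin lab ys bs a)
  (hmax : forall (yy : 'rV[R]_d) (bb : R), yy != 0 ->
            exists2 a, Aset a & smargin lab yy bb a <= ds)
  (* initialization phase: agents init (true responses), terminating *)
  (init init' : seq 'rV[R]_d) (alast : 'rV[R]_d)
  (hinitA : forall a, a \in init -> Aset a)
  (hinit_last : init = rcons init' alast)
  (hinit_stop : has (fun a => lab a == 1) init && has (fun a => lab a != 1) init)
  (hinit_first : ~~ (has (fun a => lab a == 1) init' && has (fun a => lab a != 1) init'))
  (* the algorithm's trajectory *)
  (gamma : nat -> R) (hgamma : forall t, (0 < t)%N -> 0 < gamma t)
  (A : nat -> 'rV[R]_d) (hA : forall t, (0 < t)%N -> Aset (A t))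
  (Ap Am : nat -> seq 'rV[R]_d)
  (y z sp sm : nat -> 'rV[R]_d) (b : nat -> R)
  (hAp0 : Ap 0%N = [seq a <- init | lab a == 1])
  (hAm0 : Am 0%N = [seq a <- init | lab a != 1])
  (hopt_feas : norm2 (y 1%N) <= 1)
  (hopt : forall (yy : 'rV[R]_d) (bb : R), norm2 yy <= 1 ->
            hmargin yy bb (Ap 0%N) (Am 0%N) <= hmargin (y 1%N) (b 1%N) (Ap 0%N) (Am 0%N))
  (hz1 : z 1%N = y 1%N)
  (hApS : forall t, (0 < t)%N ->
     Ap t = if lab (A t) == 1 then rcons (Ap t.-1) (proxy c lab (A t) (y t) (b t))
            else Ap t.-1)
  (hAmS : forall t, (0 < t)%N ->
     Am t = if lab (A t) == 1 then Am t.-1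
            else rcons (Am t.-1) (proxy c lab (A t) (y t) (b t)))
  (hsp : forall t, (0 < t)%N ->
     sp t \in Ap t /\ forall x, x \in Ap t -> dotp (z t) (sp t) <= dotp (z t) x)
  (hsm : forall t, (0 < t)%N ->
     sm t \in Am t /\ forall x, x \in Am t -> dotp (z t) x <= dotp (z t) (sm t))
  (hz : forall t, (0 < t)%N -> z t.+1 = projB (z t + gamma t *: (sp t - sm t)))
  (hy : forall t, (0 < t)%N ->
     y t.+1 = (\sum_(1 <= i < t.+2) gamma i)^-1 *: \sum_(1 <= i < t.+2) gamma i *: z i)
  (hb : forall t, (0 < t)%N ->
     b t.+1 = - (1 / 2) * (minseq [seq dotp (y t.+1) x | x <- Ap t]
                           + maxseq [seq dotp (y t.+1) x | x <- Am t])) :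
  forall t, (0 < t)%N -> 0 <= dotp ys (vdir (y t)) /\ 0 <= dotp ys (y t).
Proof.
have [a0 a0in a0l] : exists2 a, a \in init & lab a == 1.
  by move/andP: hinit_stop => [/hasP [a ? ?] _]; exists a.
have nys : 0 < norm2 ys.
  rewrite lt_neqAle norm2_ge0 andbT; apply/negP => /eqP e.
  have := hmarg _ (hinitA _ a0in); rewrite /smargin -e invr0 mulr0 => h.
  by move: (lt_le_trans hds h); rewrite ltxx.
have pos : forall a, Aset a -> lab a = 1 -> 0 < dotp ys a + bs.
  move=> a ha hl; have := hmarg _ ha; rewrite /smargin hl mul1r => h.
  have h2 : 0 < (dotp ys a + bs) / norm2 ys by apply: lt_le_trans h.
  by rewrite -(divfK (lt0r_neq0 nys) (dotp ys a + bs)) mulr_gt0.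
have neg : forall a, Aset a -> lab a != 1 -> dotp ys a + bs < 0.
  move=> a ha hl; have [hl'|hl'] := hlab _ ha; first by rewrite hl' eqxx in hl.
  have := hmarg _ ha; rewrite /smargin hl' mulN1r => h.
  have h2 : 0 < - (dotp ys a + bs) / norm2 ys by apply: lt_le_trans h.
  rewrite -oppr_gt0 -(divfK (lt0r_neq0 nys) (- (dotp ys a + bs))).
  by rewrite mulr_gt0.
have gys : dotp ys ys != 0.
  apply/negP => /eqP e; move: nys; by rewrite /norm2 e sqrtr0 ltxx.
have y1pos : 0 <= dotp ys (y 1%N).
  rewrite leNgt; apply/negP => hneg.
  set k := 2 * dotp (y 1%N) ys / dotp ys ys.
  have gpos : 0 < dotp ys ys.
    by rewrite lt_neqAle eq_sym gys /= /dotp sumr_ge0 // => i _; rewrite -expr2 sqr_ge0.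
  have kneg : k < 0.
    rewrite /k dotpC pmulr_llt0 ?invr_gt0 //.
    by rewrite pmulr_rlt0.
  set yy := y 1%N - k *: ys; set bb := b 1%N - k * bs.
  have nyy : norm2 yy = norm2 (y 1%N).
    rewrite /norm2; congr (Num.sqrt _).
    rewrite /yy !dotpBr !dotpBl !dotpZr !dotpZl (@dotpC _ _ ys (y 1%N)) /k.
    by field.
  have := hopt yy bb; rewrite nyy => /(_ hopt_feas); apply/negP; rewrite -ltNge.
  rewrite /hmargin lt_min !gt_min; apply/andP; split; apply/orP.
  - left; apply: minseq_lt.
      apply/negP => /eqP e; have : a0 \in Ap 0%N by rewrite hAp0 mem_filter a0l a0in.
      by rewrite e.
    move=> x; rewrite hAp0 mem_filter => /andP [/eqP hl hx].
    have hp := pos _ (hinitA _ hx) hl.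
    rewrite /yy /bb dotpBl dotpZl.
    have : 0 < - k * (dotp ys x + bs) by rewrite mulr_gt0 // oppr_gt0.
    lra.
  - right; apply: minseq_lt.
      move/andP: hinit_stop => [_ /hasP [a1 a1in a1l]].
      apply/negP => /eqP e; have : a1 \in Am 0%N by rewrite hAm0 mem_filter a1l a1in.
      by rewrite e.
    move=> x; rewrite hAm0 mem_filter => /andP [hl hx].
    have hp := neg _ (hinitA _ hx) hl.
    rewrite /yy /bb dotpBl dotpZl.
    have : 0 < k * (dotp ys x + bs) by rewrite nmulr_rgt0.
    lra.
have inv : forall n, [/\ (forall x, x \in Ap n -> 0 < dotp ys x + bs),
   (forall x, x \in Am n -> dotp ys x + bs < 0),
   (forall i, (0 < i)%N -> (i <= n.+1)%N -> 0 <= dotp ys (z i)) &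
   0 <= dotp ys (y n.+1)].
  elim=> [|n [IHp IHm IHz IHy]].
    split.
    - move=> x; rewrite hAp0 mem_filter => /andP [/eqP hl hx]; exact: pos (hinitA _ hx) hl.
    - move=> x; rewrite hAm0 mem_filter => /andP [hl hx]; exact: neg (hinitA _ hx) hl.
    - move=> i i0 i1; have -> : i = 1%N by apply/eqP; rewrite eqn_leq i1 i0.
      by rewrite hz1.
    - exact: y1pos.
  have t0 : (0 < n.+1)%N by [].
  have hApn : forall x, x \in Ap n.+1 -> 0 < dotp ys x + bs.
    move=> x; rewrite (hApS _ t0) /=; case: ifP => [/eqP hl|_]; last exact: IHp.
    rewrite mem_rcons inE => /orP [/eqP ->|]; last exact: IHp.
    apply: lt_le_trans (pos _ (hA _ t0) hl) _; rewrite lerD2r; exact: proxy_ge.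
  have hAmn : forall x, x \in Am n.+1 -> dotp ys x + bs < 0.
    move=> x; rewrite (hAmS _ t0) /=; case: ifP => [_|hl]; first exact: IHm.
    rewrite mem_rcons inE => /orP [/eqP ->|]; last exact: IHm.
    apply: le_lt_trans _ (neg _ (hA _ t0) (negbT hl)); rewrite lerD2r; apply: proxy_le => //; exact: negbT.
  have hzn : 0 <= dotp ys (z n.+2).
    rewrite (hz _ t0); have [spin _] := hsp _ t0; have [smin _] := hsm _ t0.
    have h1 := hApn _ spin; have h2 := hAmn _ smin.
    have h4 : 0 <= dotp ys (sp n.+1) - dotp ys (sm n.+1) by lra.
    have h3 : 0 <= dotp ys (z n.+1 + gamma n.+1 *: (sp n.+1 - sm n.+1)).
      rewrite dotpDr dotpZr dotpBr; apply: addr_ge0; first exact: IHz.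
      by apply: mulr_ge0 => //; apply: ltW; apply: hgamma.
    rewrite /projB; case: ifP => _ //; rewrite dotpZr mulr_ge0 // invr_ge0 norm2_ge0 //.
  have hzall : forall i, (0 < i)%N -> (i <= n.+2)%N -> 0 <= dotp ys (z i).
    move=> i i0 i1; case: (ltnP i n.+2) => hi; first exact: IHz i0 hi.
    have e : i = n.+2 by apply/eqP; rewrite eqn_leq i1 hi.
    by rewrite e.
  split => //.
  rewrite (hy _ t0) dotpZr; apply: mulr_ge0.
    rewrite invr_ge0 big_nat_cond sumr_ge0 // => i /andP [/andP [h1 _] _].
    exact: ltW (hgamma _ h1).
  rewrite dotp_sumr big_nat_cond sumr_ge0 // => i /andP [/andP [h1 h2] _].
  rewrite dotpZr mulr_ge0 ?(ltW (hgamma _ h1)) //; apply: hzall h1 _.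
  by rewrite -ltnS.
move=> t; case: t => // n _; have [_ _ _ hyn] := inv n; split => //.
exact: vdir_ge0.
Qed.
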